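(* Let $1\le M_{\mathrm{reg}}\le M$ and consider the clipped dendPLRNN $$\bm{z}_t=\bm{A}\bm{z}_{t-1}+\bm{W}\sum_{b=1}^B\alpha_b\big[\max(0,\bm{z}_{t-1}-\bm{h}_b)-\max(0,\bm{z}_{t-1})\big]+\bm{h}_0$$ with $\alpha_b\in\mathbb{R}$, $\bm{h}_b\in\mathbb{R}^M$, where the manifold attractor regularization is strictly enforced, i.e. $$\bm{A}=\begin{pmatrix}\bm{I}_{M_{\mathrm{reg}}}&\bm{0}\\ \bm{0}&\bm{A}_{\mathrm{nreg}}\end{pmatrix},\quad \bm{W}=\begin{pmatrix}\bm{0}_{M_{\mathrm{reg}}\times M_{\mathrm{reg}}}&\bm{0}\\ \bm{S}&\bm{W}_{\mathrm{nreg}}\end{pmatrix},\quad \bm{h}_0=\begin{pmatrix}\bm{0}\\ \bm{h}_0^{\mathrm{nreg}}\end{pmatrix},$$ with $\bm{A}_{\mathrm{nreg}}\in\mathbb{R}^{(M-M_{\mathrm{reg}})\times(M-M_{\mathrm{reg}})}$ diagonal, $\bm{W}_{\mathrm{nreg}}$ of the same size with zero diagonal, $\bm{S}\in\mathbb{R}^{(M-M_{\mathrm{reg}})\times M_{\mathrm{reg}}}$ arbitrary and $\bm{h}_0^{\mathrm{nreg}}\in\mathbb{R}^{M-M_{\mathrm{reg}}}$. If $\sigma_{\max}(\bm{A}_{\mathrm{nreg}})<1$, then every orbit $(\bm{z}_t)_{t\ge1}$ is bounded.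
   Context: $\max$ is taken componentwise; $\sigma_{\max}$ denotes the largest singular value. The manifold attractor regularization penalizes $\sum_{i\le M_{\mathrm{reg}}}(A_{ii}-1)^2+\sum_{i\le M_{\mathrm{reg}}}\sum_{j\neq i}W_{ij}^2+\sum_{i\le M_{\mathrm{reg}}}h_{0,i}^2$; ''strictly enforced'' means these terms are zero. *)

(* Defs.v *)
From HB Require Import structures.
From mathcomp Require Import all_boot all_order all_algebra.
From mathcomp Require Import boolp classical_sets reals.
Set Implicit Arguments. Unset Strict Implicit. Unset Printing Implicit Defensive.
Import Order.TTheory GRing.Theory Num.Theory.
Local Open Scope ring_scope.
Local Open Scope classical_set_scope.

Definition singular_value {R : realType} {n : nat} (A : 'M[R]_n) (s : R) : Prop :=
  0 <= s /\ eigenvalue (A^T *m A) (s ^+ 2).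

(* largest singular value (sup of the finitely many singular values;
   sup of the empty set, for n = 0, is 0 by the library convention) *)
Definition sigma_max {R : realType} {n : nat} (A : 'M[R]_n) : R :=
  sup [set s | singular_value A s].

Definition relu {R : realType} {m : nat} (v : 'cV[R]_m) : 'cV[R]_m :=
  map_mx (fun x => Num.max 0 x) v.

Definition dendPLRNN_step {R : realType} {M B : nat} (A W : 'M[R]_M)
  (alpha : 'I_B -> R) (h : 'I_B -> 'cV[R]_M) (h0 : 'cV[R]_M) (z : 'cV[R]_M)
  : 'cV[R]_M :=
  A *m z + W *m (\sum_(b < B) alpha b *: (relu (z - h b) - relu z)) + h0.

(* Main.v *)
Require Import Defs.
From mathcomp Require Import all_boot all_order all_algebra.
From mathcomp Require Import boolp classical_sets reals.
From mathcomp Require Import ring lra.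
Import Order.TTheory GRing.Theory Num.Theory.
Set Implicit Arguments. Unset Strict Implicit.
Local Open Scope ring_scope.

Lemma rec_bound (R : realType) (u : nat -> R) (d K : R) : `|d| < 1 -> 0 <= K ->
  (forall t, `|u t.+1 - d * u t| <= K) -> forall t, `|u t| <= `|u 0| + K/(1-`|d|).
Proof.
move=> hd hK hu.
have he : 0 < 1 - `|d| by rewrite subr_gt0.
have hKe : K / (1 - `|d|) * (1 - `|d|) = K by rewrite divfK // gt_eqF.
have hKe0 : 0 <= K / (1 - `|d|) by rewrite divr_ge0 // ltW.
move: hKe hKe0; set k := K / _ => hKe hKe0.
elim=> [|t IH]; first by rewrite lerDl.
have h1 : `|u t.+1| <= `|d| * `|u t| + K.
  have h := hu t.
  have := ler_normD (u t.+1 - d * u t) (d * u t).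
  rewrite subrK normrM. lra.
have hd0 := normr_ge0 d.
have hu0 := normr_ge0 (u 0).
have hut := normr_ge0 (u t).
nra.
Qed.

Lemma relu_diff (R : realType) (a c : R) : `|Num.max 0 (a - c) - Num.max 0 a| <= `|c|.
Proof.
rewrite /Num.max /Order.max; case: ltP => h1; case: ltP => h2.
all: rewrite ler_norml; have := ler_norm c; have := ler_norm (-c); rewrite normrN.
all: move=> ? ?; apply/andP; split; lra.
Qed.

Lemma mulmx_bound (R : realType) (p q : nat) (N : 'M[R]_(p,q)) (v : 'cV[R]_q)
  (P : 'I_q -> R) : (forall j, `|v j 0| <= P j) ->
  forall k, `|(N *m v) k 0| <= \sum_j `|N k j| * P j.
Proof.
move=> hv k; rewrite mxE; apply: le_trans (ler_norm_sum _ _ _) _.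
by apply: ler_sum => j _; rewrite normrM ler_wpM2l.
Qed.

Lemma diag_AtA (R : realType) n (A : 'M[R]_n) : is_diag_mx A ->
  forall i j, (A^T *m A) i j = A i i * A i j.
Proof.
move/is_diag_mxP => hA i j; rewrite mxE (bigD1 i) //= big1 ?addr0 ?mxE // => l hl.
by rewrite mxE hA ?mul0r // eq_sym; exact: hl.
Qed.

Lemma sum_single (R : realType) n (F : 'I_n -> R) k : (forall j, 0 <= F j) ->
  F k <= \sum_j F j.
Proof.
move=> h; rewrite (bigD1 k) //= lerDl; exact: sumr_ge0.
Qed.

Lemma sigma_diag (R : realType) n (A : 'M[R]_n) : is_diag_mx A ->
  forall k, `|A k k| <= sigma_max A.
Proof.
move=> hd k; have /is_diag_mxP hA := hd.
have hAtA := diag_AtA hd.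
have sv : singular_value A `|A k k|.
  split; first exact: normr_ge0.
  apply/eigenvalueP; exists (delta_mx 0 k).
    apply/matrixP => i j; rewrite !mxE (bigD1 k) //= big1; last first.
      by move=> l hl; rewrite mxE (negbTE hl) andbF mul0r.
    have E0 : (0 : 'I_1) == 0 by []. rewrite mxE ord1 (eqxx k) andbT E0 /= mul1r addr0 hAtA real_normK ?num_real //.
    case: (eqVneq j k) => [->|hjk]; first by rewrite ?eqxx ?mulr1 expr2.
    rewrite (hA k j) ?mulr0 ?mul0r //; by rewrite eq_sym.
  apply/eqP => /matrixP/(_ 0 k); rewrite !mxE !eqxx /= => /eqP; by rewrite oner_eq0.
apply: sup_upper_bound => //.
split; first by exists `|A k k|.
exists (\sum_j `|A j j|) => s [hs /eigenvalueP [v hv nv]].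
have : [exists j, v 0 j != 0].
  apply: contraNT nv => /existsPn h; apply/eqP/matrixP => i j; rewrite ord1 mxE.
  by move/negPn: (h j) => /eqP.
move=> /existsP [j hj].
move/matrixP: hv => /(_ 0 j); rewrite !mxE (bigD1 j) //= big1; last first.
  move=> l hl; by rewrite hAtA (hA l j) ?mulr0.
rewrite addr0 hAtA => e.
have e2 : A j j ^+ 2 = s ^+ 2.
  apply: (mulfI hj); rewrite expr2 e; ring.
have : s <= `|A j j|.
  have h0 := normr_ge0 (A j j).
  move: e2; rewrite -real_normK ?num_real // => e2; nra.
move=> h1; apply: le_trans h1 _; apply: sum_single => ?; exact: normr_ge0.
Qed.

Lemma diag_mul (R : realType) n (A : 'M[R]_n) (v : 'cV[R]_n) : is_diag_mx A ->
  forall k, (A *m v) k 0 = A k k * v k 0.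
Proof.
move/is_diag_mxP => hA k; rewrite mxE (bigD1 k) //= big1 ?addr0 // => l hl.
by rewrite (hA k l) ?mul0r // eq_sym.
Qed.

Theorem proposition2 (R : realType) (Mreg Mn B : nat) (hMreg : (1 <= Mreg)%N)
  (Anreg : 'M[R]_Mn) (Wnreg : 'M[R]_Mn) (S : 'M[R]_(Mn, Mreg))
  (h0nreg : 'cV[R]_Mn) (alpha : 'I_B -> R) (h : 'I_B -> 'cV[R]_(Mreg + Mn))
  (hAdiag : is_diag_mx Anreg)
  (hWdiag : forall i : 'I_Mn, Wnreg i i = 0)
  (hsigma : sigma_max Anreg < 1)
  (z : nat -> 'cV[R]_(Mreg + Mn))
  (hz : forall t : nat,
     z t.+1 = dendPLRNN_step (block_mx 1%:M 0 0 Anreg) (block_mx 0 0 S Wnreg)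
                alpha h (col_mx 0 h0nreg) (z t)) :
  exists C : R, forall t : nat, (1 <= t)%N ->
    forall i : 'I_(Mreg + Mn), `|z t i 0| <= C.
Proof.
pose ph t := \sum_(b < B) alpha b *: (relu (z t - h b) - relu (z t)).
have key : forall t, z t.+1 = block_mx 1%:M 0 0 Anreg *m z t
    + block_mx 0 0 S Wnreg *m ph t + col_mx 0 h0nreg by move=> t; rewrite hz.
pose P j := \sum_(b < B) `|alpha b| * `|h b j 0|.
have P0 : forall j, 0 <= P j.
  by move=> j; apply: sumr_ge0 => b _; rewrite mulr_ge0.
have hph : forall t j, `|ph t j 0| <= P j.
  move=> t j; rewrite summxE; apply: le_trans (ler_norm_sum _ _ _) _.
  apply: ler_sum => b _; rewrite /relu !mxE normrM ler_wpM2l //.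
  exact: relu_diff.
have blk : forall t, z t.+1 = col_mx (usubmx (z t))
    (Anreg *m dsubmx (z t) + (S *m usubmx (ph t) + Wnreg *m dsubmx (ph t)) + h0nreg).
  move=> t; rewrite key; set u := z t; set p := ph t.
  rewrite -[u in LHS]vsubmxK -[p in LHS]vsubmxK !mul_block_col !add_col_mx.
  by rewrite mul1mx !mul0mx !add0r !addr0.
have hi : forall i : 'I_(Mreg + Mn), exists C, forall t, `|z t i 0| <= C.
  move=> i; rewrite -(splitK i); case: (split i) => k /=.
    exists `|z 0%N (lshift Mn k) 0|; elim=> [|t IH] //.
    by rewrite blk col_mxEu mxE.
  set d := Anreg k k.
  set K := \sum_j `|S k j| * P (lshift Mn j) + \sum_j `|Wnreg k j| * P (rshift Mreg j)
     + `|h0nreg k 0|.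
  have hd : `|d| < 1 by apply: le_lt_trans (sigma_diag hAdiag k) hsigma.
  have hK : 0 <= K.
    by rewrite !addr_ge0 // sumr_ge0 // => j _; rewrite mulr_ge0.
  exists (`|z 0%N (rshift Mreg k) 0| + K / (1 - `|d|)).
  apply: (rec_bound (u := fun t => z t (rshift Mreg k) 0)) => // t.
  rewrite blk col_mxEd [(_ + h0nreg) _ _]mxE [(Anreg *m _ + _) _ _]mxE diag_mul // [dsubmx (z t) _ _]mxE. rewrite (_ : forall a b c : R, a + b + c - a = b + c); last by move=> a b c; ring. rewrite /K.
  apply: le_trans (ler_normD _ _) _; rewrite lerD2r mxE.
  apply: le_trans (ler_normD _ _) _; apply: lerD.
    by apply: mulmx_bound => j; rewrite mxE.
  by apply: mulmx_bound => j; rewrite mxE.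
have [f hf] := choice hi.
exists (\sum_i `|f i|) => t _ i.
apply: le_trans (hf i t) _; apply: le_trans (ler_norm (f i)) _.
by apply: sum_single => ?; exact: normr_ge0.
Qed.
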